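(* For every integer $\ell\ge3$ there exists an admissible partition of $\ell$. Moreover, if $\ell\ge500$, there exists an admissible partition $\mathfrak{a}$ of $\ell$ such that $c^{\mathfrak{a}}((a,b)^6)\ge\ell/200$ for all $(a,b)\in\{3,4,5\}\times\{3,4,5\}$.
   Context: A cyclic partition of $\ell\in\mathbb{N}$ is a tuple $(a_1,\dots,a_t)$ of positive integers with $\sum_i a_i=\ell$, considered up to cyclic rotation, with indices modulo $t$. For a cyclic partition $\mathfrak{a}=(a_1,\dots,a_t)$ and a finite sequence $a'=(a'_1,\dots,a'_{t'})$, let $c^{\mathfrak{a}}(a')=|\{i\in[t]: a_{(i+j)\bmod t}=a'_j\text{ for all }j\in[t']\}|$ (where $x \bmod t$ denotes the element of $[t]$ congruent to $x$); e.g. for $\mathfrak{a}=(a)$, $c^{\mathfrak{a}}(a,a)=1$. Write $c^{\mathfrak{a}}(a,b)$ for $c^{\mathfrak{a}}((a,b))$. A cyclic partition $\mathfrak{a}$ is admissible if all its parts lie in $\{3,4,5\}$ and $c^{\mathfrak{a}}(a,b)=c^{\mathfrak{a}}(b,a)$ for all $a,b\in\{3,4,5\}$. For a sequence $s$, $s^m$ denotes the concatenation of $m$ copies of $s$; so $(a,b)^6$ is a sequence of length $12$. *)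

(* Defs.v *)
From mathcomp Require Import all_boot.
Set Implicit Arguments. Unset Strict Implicit. Unset Printing Implicit Defensive.

(* A cyclic partition is represented by a representative sequence
   a = [:: a_1; ...; a_t] (0-based in Rocq). All notions below are
   invariant under rotation. *)

Definition cyc_count (a s : seq nat) : nat :=
  let t := size a in
  #|[set i : 'I_t | [forall j : 'I_(size s),
        nth 0 a ((i + j) %% t) == nth 0 s j]]|.

Definition seq_pow (s : seq nat) (m : nat) : seq nat := flatten (nseq m s).

Definition parts345 : seq nat := [:: 3; 4; 5].

Definition cyc_partition (l : nat) (a : seq nat) : Prop :=
  all (fun x => 0 < x) a /\ sumn a = l.

Definition admissible (a : seq nat) : Prop :=
  all (fun x => x \in parts345) a /\
  forall x y, x \in parts345 -> y \in parts345 ->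
    cyc_count a [:: x; y] = cyc_count a [:: y; x].

(* Main.v *)
Require Import Defs.
From mathcomp Require Import all_boot zify.

Lemma card_count (t : nat) (Q : nat -> bool) :
  #|[set i : 'I_t | Q i]| = count Q (iota 0 t).
Proof.
rewrite -sum1dep_card -sum1_count.
rewrite -(big_mkord (fun i => Q i) (fun _ => 1)).
by rewrite /index_iota subn0.
Qed.

Lemma forall_iota n (F : nat -> bool) :
  [forall j : 'I_n, F j] = all F (iota 0 n).
Proof.
apply/forallP/allP => [H j|H j].
  by rewrite mem_iota add0n => /andP[_ lt]; exact: (H (Ordinal lt)).
by apply: H; rewrite mem_iota add0n ltn_ord.
Qed.

Definition Pm (a s : seq nat) (i : nat) :=
  all (fun j => nth 0 a ((i + j) %% size a) == nth 0 s j) (iota 0 (size s)).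

Lemma cyc_countE a s : cyc_count a s = count (Pm a s) (iota 0 (size a)).
Proof.
rewrite /cyc_count -card_count; apply: eq_card => i.
by rewrite !inE (forall_iota _ (fun j => nth 0 a ((i + j) %% size a) == nth 0 s j)).
Qed.

Lemma count_nth_iota {T : Type} (x0 : T) (p : pred T) (s : seq T) :
  count p s = count (fun i => p (nth x0 s i)) (iota 0 (size s)).
Proof. by rewrite -{1}(mkseq_nth x0 s) /mkseq count_map. Qed.

Definition cntp (a : seq nat) x y := count_mem (x, y) (zip a (rot 1 a)).

Lemma cyc_count_pair a x y : cyc_count a [:: x; y] = cntp a x y.
Proof.
rewrite cyc_countE /cntp (count_nth_iota (0,0)) size_zip size_rot minnn.
apply: eq_in_count => i; rewrite mem_iota add0n => /andP[_ lt].
rewrite nth_zip ?size_rot // /Pm /=.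
case: a lt => [//|z a'] lt /=.
rewrite /= in lt *; rewrite addn0 (modn_small lt) rot1_cons nth_rcons andbT.
have -> : nth 0 (z :: a') ((i + 1) %% (size a').+1) =
   (if i < size a' then nth 0 a' i else if i == size a' then z else 0).
  case: (ltnP i (size a')) => h.
    by rewrite modn_small ?addn1 // ltnS.
  have -> : i = size a' by move: lt; rewrite ltnS => h2; apply/eqP; rewrite eqn_leq h h2.
  by rewrite eqxx addn1 modnn.
by rewrite xpair_eqE.
Qed.

Lemma take_zip' (A B : Type) n (s : seq A) (u : seq B) :
  take n (zip s u) = zip (take n s) (take n u).
Proof.
elim: s u n => [|x s IH] [|y u] [|n] //=; rewrite ?IH //.
all: by case: (take _ _).
Qed.

Lemma drop_zip' (A B : Type) n (s : seq A) (u : seq B) :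
  drop n (zip s u) = zip (drop n s) (drop n u).
Proof.
elim: s u n => [|x s IH] [|y u] [|n] //=; rewrite ?IH //.
all: by case: (drop _ _).
Qed.

Lemma rot_zip' (A B : Type) k (s : seq A) (u : seq B) : size s = size u ->
  rot k (zip s u) = zip (rot k s) (rot k u).
Proof.
move=> E; by rewrite /rot drop_zip' take_zip' zip_cat // !size_drop E.
Qed.

Lemma count_zip_swap (s u : seq nat) x y :
  count_mem (x, y) (zip s u) = count_mem (y, x) (zip u s).
Proof.
elim: s u => [|a s IH] [|b u] //=.
by rewrite IH !xpair_eqE andbC.
Qed.

Lemma pal_sym a x y : rev a = a -> cntp a x y = cntp a y x.
Proof.
move=> Hr; rewrite /cntp.
transitivity (count_mem (x, y) (zip (rev a) (rot 1 (rev a)))); first by rewrite Hr.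
rewrite -rev_rotr -rev_zip ?size_rotr // count_rev count_zip_swap.
have -> : zip (rotr 1 a) a = rotr 1 (zip a (rot 1 a)).
  rewrite -{2}(rotK 1 a) /rotr size_zip size_rot minnn.
  by rewrite rot_zip' ?size_rot.
have /permP H : perm_eq (rotr 1 (zip a (rot 1 a))) (zip a (rot 1 a)) by rewrite /rotr perm_rot.
exact: H.
Qed.

Fixpoint locc (w b : seq nat) : nat :=
  if b is x :: b' then ((take (size w) b == w) : nat) + locc w b' else 0.

Lemma loccE w b :
  locc w b = count (fun i => take (size w) (drop i b) == w) (iota 0 (size b)).
Proof.
elim: b => [//|x b IH] /=.
rewrite IH; congr (_ + _).
rewrite -(addn0 1) iotaDl count_map.
by apply: eq_count => i.
Qed.

Lemma locc_le w a : locc w a <= cyc_count a w.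
Proof.
rewrite loccE cyc_countE; apply: sub_count => i /= /eqP H.
apply/allP => j; rewrite mem_iota add0n => /andP[_ ltj].
have Hs : size (take (size w) (drop i a)) = size w by rewrite H.
rewrite size_take size_drop in Hs.
have hij : i + j < size a.
  move: Hs; case: ifP => h1 h2; lia.
rewrite modn_small // -H nth_take // nth_drop //.
Qed.

Lemma locc_cat w p q : locc w p + locc w q <= locc w (p ++ q).
Proof.
elim: p => [//|x p IH] /=.
rewrite -addnA leq_add //.
case: eqP => //= H.
rewrite -cat_cons takel_cat ?H ?eqxx //.
have Hs : size (take (size w) (x :: p)) = size w by rewrite H.
move: Hs; rewrite size_take; case: ifP => h; lia.
Qed.

Fixpoint R (k : nat) (s : seq nat) : seq nat :=
  if k is k'.+1 then s ++ R k' s else [::].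

Lemma locc_R w k s : k * locc w s <= locc w (R k s).
Proof.
elim: k => [//|k IH] /=.
apply: leq_trans (locc_cat _ _ _); rewrite mulSn leq_add2l //.
Qed.

Lemma R_comm k s : R k s ++ s = s ++ R k s.
Proof. by elim: k => [|k IH] /=; rewrite ?cats0 // -catA IH. Qed.

Lemma rev_R k s : rev (R k s) = R k (rev s).
Proof. by elim: k => [//|k IH] /=; rewrite rev_cat IH R_comm. Qed.

Lemma sumn_R k s : sumn (R k s) = k * sumn s.
Proof. by elim: k => [//|k IH] /=; rewrite sumn_cat IH mulSn. Qed.

Lemma all_R (p : pred nat) k s : all p s -> all p (R k s).
Proof. by move=> H; elim: k => [//|k IH] /=; rewrite all_cat H. Qed.

Definition B0 : seq nat := nseq 16 3 ++ nseq 16 4 ++ nseq 16 5 ++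
  seq_pow [:: 3; 4] 10 ++ seq_pow [:: 3; 5] 10 ++ seq_pow [:: 4; 5] 10.

Definition esq (r : nat) : seq nat :=
  match r with 0 => [::] | 1 => [:: 4; 5; 4] | 2 => [:: 4; 4] | 3 => [:: 3]
  | 4 => [:: 4] | _ => [:: 5] end.

Definition Dv (v : nat) : seq nat :=
  let e := esq (v %% 6) in
  nseq ((v - sumn e) %/ 6) 3 ++ e ++ nseq ((v - sumn e) %/ 6) 3.

Definition large (l : nat) : seq nat :=
  let k := (l - 13) %/ 864 in R k B0 ++ Dv (l - 864 * k) ++ R k (rev B0).

Definition small (l : nat) : seq nat :=
  let n := l %/ 200 + 1 in
  let q := n + 5 in let c := n + 11 in
  let base := 24 * q + 5 * c + 4 in
  let b := n + 11 + (l - base - 4 * (n + 11)) %% 3 in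
  let a := (l - base - 4 * b) %/ 3 in
  nseq a 3 ++ seq_pow [:: 4; 3] q ++ nseq b 4 ++ seq_pow [:: 5; 4] q ++
  nseq c 5 ++ seq_pow [:: 3; 5] q ++ [:: 4].

Definition tiny (l : nat) : seq nat :=
  if l %% 3 == 0 then nseq (l %/ 3) 3
  else if l %% 3 == 1 then nseq (l %/ 3 - 1) 3 ++ [:: 4]
  else nseq (l %/ 3 - 1) 3 ++ [:: 5].

Definition admb (a : seq nat) : bool :=
  all (fun x => x \in parts345) a &&
  all (fun x => all (fun y => cntp a x y == cntp a y x) parts345) parts345.

Definition chk1 l a := (sumn a == l) && admb a.
Definition chk2 l a := chk1 l a &&
  all (fun x => all (fun y => l <= 200 * locc (seq_pow [:: x; y] 6) a) parts345) parts345.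

Lemma tiny_ok : all (fun l => chk1 l (tiny l)) (iota 3 497).
Proof. vm_compute. reflexivity. Qed.

Lemma small_ok : all (fun l => chk2 l (small l)) (iota 500 377).
Proof. vm_compute. reflexivity. Qed.

Lemma B0_ok : all (fun x => all (fun y =>
   9 <= locc (seq_pow [:: x; y] 6) B0 + locc (seq_pow [:: x; y] 6) (rev B0)) parts345) parts345.
Proof. vm_compute. reflexivity. Qed.

Lemma sumB0 : sumn B0 = 432.
Proof. by vm_compute. Qed.
Lemma allB0 : all (fun x => x \in parts345) B0.
Proof. by vm_compute. Qed.

Lemma in345 x : x \in parts345 -> [\/ x = 3, x = 4 | x = 5].
Proof. by rewrite !inE => /or3P[]/eqP->; [constructor 1|constructor 2|constructor 3]. Qed.

Lemma chk1_ok l a : chk1 l a -> cyc_partition l a /\ admissible a.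
Proof.
case/andP => /eqP Hs /andP[Hp Hc]; split; [split|split] => //.
  by apply: sub_all Hp => x /in345[]->.
move=> x y Hx Hy; rewrite !cyc_count_pair.
by move/allP: Hc => /(_ x Hx) /allP /(_ y Hy) /eqP.
Qed.

Lemma chk2_cnt l a x y : chk2 l a -> x \in parts345 -> y \in parts345 ->
  l <= 200 * cyc_count a (seq_pow [:: x; y] 6).
Proof.
case/andP => _ /allP /(_ x) H Hx Hy.
move/allP: (H Hx) => /(_ y Hy) H2.
by apply: leq_trans H2 _; rewrite leq_mul2l locc_le orbT.
Qed.

Lemma Dv_sum v : 13 <= v -> sumn (Dv v) = v.
Proof.
move=> h; rewrite /Dv !sumn_cat !sumn_nseq.
have Hv := divn_eq v 6; have Hr : v %% 6 < 6 by rewrite ltn_mod.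
move: Hv Hr; case: (v %% 6) => [|[|[|[|[|[|r]]]]]] /= Hv Hr; lia.
Qed.

Lemma Dv_rev v : rev (Dv v) = Dv v.
Proof.
rewrite /Dv !rev_cat !rev_nseq -catA; congr (_ ++ (_ ++ _)).
by case: (v %% 6) => [|[|[|[|[|[|r]]]]]].
Qed.

Lemma Dv_all v : all (fun x => x \in parts345) (Dv v).
Proof.
rewrite /Dv !all_cat !all_nseq !orbT /=.
by case: (v %% 6) => [|[|[|[|[|[|r]]]]]].
Qed.

Opaque Dv.

Lemma large_ok l : 877 <= l ->
  cyc_partition l (large l) /\ admissible (large l) /\
  forall x y, x \in parts345 -> y \in parts345 ->
    l <= 200 * cyc_count (large l) (seq_pow [:: x; y] 6).
Proof.
move=> hl.
set k := (l - 13) %/ 864.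
have hk1 : 864 * k <= l - 13 by rewrite /k; lia.
have hk2 : l - 13 < 864 * k + 864 by rewrite /k; lia.
have hk0 : 1 <= k by rewrite /k; lia.
have EL : large l = R k B0 ++ Dv (l - 864 * k) ++ R k (rev B0) by [].
have HDa := Dv_all (l - 864 * k).
have HDr := Dv_rev (l - 864 * k).
have HDs : sumn (Dv (l - 864 * k)) = l - 864 * k by apply: Dv_sum; lia.
have HB9 := B0_ok; have HBa := allB0; have HBs := sumB0.
rewrite EL; move: (Dv (l - 864 * k)) HDa HDr HDs => D HDa HDr HDs.
move: B0 HB9 HBa HBs => B0 HB9 HBa HBs.
have Hall : all (fun x => x \in parts345) (R k B0 ++ D ++ R k (rev B0)).
  by rewrite !all_cat HDa !all_R ?all_rev ?HBa.
have Hrev : rev (R k B0 ++ D ++ R k (rev B0)) = R k B0 ++ D ++ R k (rev B0).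
  by rewrite !rev_cat !rev_R revK HDr catA.
have Hsum : sumn (R k B0 ++ D ++ R k (rev B0)) = l.
  rewrite !sumn_cat !sumn_R sumn_rev HBs HDs; lia.
split; [split|split; [split|]] => //.
- by apply: sub_all Hall => x /in345[]->.
- by move=> x y _ _; rewrite !cyc_count_pair pal_sym.
move=> x y Hx Hy.
move/allP: HB9 => /(_ x Hx) /allP /(_ y Hy) H9.
set w := seq_pow [:: x; y] 6 in H9 *.
have H1 : k * (locc w B0 + locc w (rev B0)) <= cyc_count (R k B0 ++ D ++ R k (rev B0)) w.
  apply: leq_trans (locc_le _ _).
  rewrite mulnDr.
  apply: leq_trans (locc_cat _ _ _).
  apply: leq_add; first exact: locc_R.
  apply: leq_trans (locc_cat _ _ _).
  rewrite -[X in X <= _]add0n leq_add //; exact: locc_R.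
have H2 : 9 * k <= cyc_count (R k B0 ++ D ++ R k (rev B0)) w.
  by apply: leq_trans H1; rewrite mulnC leq_mul2l H9 orbT.
lia.
Qed.

Theorem proposition4p1 :
  (forall l : nat, 3 <= l ->
     exists a : seq nat, cyc_partition l a /\ admissible a) /\
  (forall l : nat, 500 <= l ->
     exists a : seq nat, cyc_partition l a /\ admissible a /\
       forall x y, x \in parts345 -> y \in parts345 ->
         l <= 200 * cyc_count a (seq_pow [:: x; y] 6)).
Proof.
have P2 : forall l : nat, 500 <= l ->
     exists a : seq nat, cyc_partition l a /\ admissible a /\
       forall x y, x \in parts345 -> y \in parts345 ->
         l <= 200 * cyc_count a (seq_pow [:: x; y] 6).
  move=> l hl; case: (leqP 877 l) => h.
    by exists (large l); exact: large_ok.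
  have Hc : chk2 l (small l).
    by apply: (allP small_ok); rewrite mem_iota; lia.
  exists (small l); have [H1 H2] := chk1_ok l (small l) (proj1 (andP Hc)).
  by split; [|split] => // x y; exact: chk2_cnt.
split => // l hl; case: (leqP 500 l) => h.
  by have [a [H1 [H2 _]]] := P2 l h; exists a.
exists (tiny l); apply: (chk1_ok l).
by apply: (allP tiny_ok); rewrite mem_iota; lia.
Qed.
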